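(* Let $G$ be a graph, $B\subseteq V(G)$ and $\ell\ge 1$. Then $B$ is an $\ell$-edge-leaky forcing set of $G$ if and only if $B$ is an $(\ell-1)$-leaky forcing set of $G$ such that for every set $L\subseteq V(G)$ of $\ell-1$ vertex leaks and every $v\in V(G)\setminus B$ there exist forces $x\to v$ and $y\to v$ in $\mathcal{F}_L(B)$ with $x\neq y$.
   Context: All graphs are finite, simple and undirected. Zero forcing: a blue vertex $u$ with exactly one white neighbor $w$ may force $w$ (color it blue), written $u\to w$. From an initial blue set $B$, a forcing sequence is a chronologically ordered list of forces each valid when performed. A vertex leak is a vertex not allowed to perform any force. $B$ is an $\ell$-leaky forcing set if for every set $L\subseteq V(G)$ of at most $\ell$ vertex leaks, exhaustively applying the forcing rule from $B$ with no vertex of $L$ forcing colors all of $V(G)$ blue (a $0$-leaky forcing set is a zero forcing set). For $L\subseteq V(G)$, $\mathcal{F}_L(B)$ is the set of all forces $x\to v$ that occur in some forcing sequence from $B$ in which no vertex of $L$ performs a force. An edge leak is an edge $xy\in E(G)$ across which no force may be performed (neither $x\to y$ nor $y\to x$). $B$ is an $\ell$-edge-leaky forcing set if for every set of at most $\ell$ edge leaks, exhaustively applying the forcing rule from $B$ without forcing across leak edges colors all of $V(G)$ blue. *)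

(* Defs.v *)
From mathcomp Require Import all_boot.
Set Implicit Arguments. Unset Strict Implicit. Unset Printing Implicit Defensive.

(* A finite simple graph: vertex type T : finType, adjacency e : rel T,
   assumed symmetric and irreflexive (hypotheses in the theorem). *)

Section Forcing.
Variables (T : finType) (e : rel T).

(* Edge leaks are 2-element vertex sets {x,y} (edges of G); no force may be
   performed across them.  u -> w is valid w.r.t. the current blue set S if
   u is blue, u is not a vertex leak, w is white, uw is an edge that is not
   leaky, and w is the only white neighbour of u (in G). *)
Definition valid_force (Lv : {set T}) (Le : {set {set T}}) (S : {set T})
    (u w : T) : bool :=
  [&& u \in S, u \notin Lv, w \notin S, e u w, [set u; w] \notin Le &
      [forall z, (e u z && (z \notin S)) ==> (z == w)]].

Fixpoint valid_seq (Lv : {set T}) (Le : {set {set T}}) (S : {set T})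
    (s : seq (T * T)) : bool :=
  if s is f :: s' then valid_force Lv Le S f.1 f.2 && valid_seq Lv Le (f.2 |: S) s'
  else true.

Fixpoint after (S : {set T}) (s : seq (T * T)) : {set T} :=
  if s is f :: s' then after (f.2 |: S) s' else S.

Definition stalled (Lv : {set T}) (Le : {set {set T}}) (S : {set T}) : bool :=
  [forall u, forall w, ~~ valid_force Lv Le S u w].

Definition colors_all (Lv : {set T}) (Le : {set {set T}}) (B : {set T}) : Prop :=
  forall s, valid_seq Lv Le B s -> stalled Lv Le (after B s) ->
    after B s = [set: T].

Definition leaky_forcing_set (B : {set T}) (l : nat) : Prop :=
  forall L : {set T}, #|L| <= l -> colors_all L set0 B.

Definition edge_set (Le : {set {set T}}) : Prop :=
  forall E, E \in Le -> exists x y, e x y /\ E = [set x; y].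

Definition edge_leaky_forcing_set (B : {set T}) (l : nat) : Prop :=
  forall Le : {set {set T}}, edge_set Le -> #|Le| <= l -> colors_all set0 Le B.

(* F_L(B): forces x -> v occurring in some forcing sequence from B in which
   no vertex of L performs a force. *)
Definition forces_in (L : {set T}) (B : {set T}) (x v : T) : Prop :=
  exists s, valid_seq L set0 B s /\ (x, v) \in s.

End Forcing.

(* Main.v *)
Require Import Defs.
From mathcomp Require Import all_boot.
From mathcomp Require Import zify.
From Stdlib Require Import Classical.
Set Implicit Arguments. Unset Strict Implicit. Unset Printing Implicit Defensive.

Section Proofs.
Variables (T : finType) (e : rel T).

Lemma vf_lift (Lv : {set T}) (Le : {set {set T}}) (S S' : {set T}) p r : S' \subset S -> r \notin S ->
  valid_force e Lv Le S' p r -> valid_force e Lv Le S p r.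
Proof.
move=> sub rS /and5P [pS pL _ epr /andP [eL /forallP H]].
apply/and5P; split => //; first exact: (subsetP sub).
apply/andP; split => //; apply/forallP => z; apply/implyP => /andP [ez zS].
have zS' : z \notin S' by apply: contra zS; apply: (subsetP sub).
by move/implyP: (H z); apply; rewrite ez zS'.
Qed.

Lemma vf_uniq (Lv Lv' : {set T}) (Le Le' : {set {set T}}) (S : {set T}) p r r' : valid_force e Lv Le S p r ->
  valid_force e Lv' Le' S p r' -> r' = r.
Proof.
move=> /and5P [_ _ _ _ /andP [_ /forallP H]] /and5P [_ _ r'S er' _].
by apply/eqP; move: (H r'); rewrite er' r'S.
Qed.

Lemma vf_drop (Lv : {set T}) (Le : {set {set T}}) (S : {set T}) p r : valid_force e Lv Le S p r -> valid_force e set0 Le S p r.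
Proof. by move=> /and5P [? ? ? ? ?]; apply/and5P; split; rewrite ?inE. Qed.

Lemma vf_setLv (Lv Lv' : {set T}) (Le : {set {set T}}) (S : {set T}) p r : valid_force e Lv Le S p r -> p \notin Lv' ->
  valid_force e Lv' Le S p r.
Proof. by move=> /and5P [? ? ? ? ?] ?; apply/and5P; split. Qed.

Lemma vf_mono (Lv : {set T}) (Le Le' : {set {set T}}) (S : {set T}) p r : Le \subset Le' -> valid_force e Lv Le' S p r ->
  valid_force e Lv Le S p r.
Proof.
move=> sub /and5P [a b c d /andP [f g]]; apply/and5P; split => //.
apply/andP; split => //; apply: contra f; exact: (subsetP sub).
Qed.

Lemma vs_mono (Lv : {set T}) (Le Le' : {set {set T}}) : Le \subset Le' -> forall t S,
  valid_seq e Lv Le' S t -> valid_seq e Lv Le S t.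
Proof.
move=> sub; elim=> [|f t IH] S //= /andP [vf vs]; apply/andP; split;
  [exact: vf_mono vf | exact: IH].
Qed.

Lemma after_sub (t : seq (T * T)) : forall S : {set T}, S \subset after S t.
Proof.
elim: t => [|f t IH] S //=; apply: subset_trans (IH _); exact: subsetUr.
Qed.

Lemma forced (Lv : {set T}) (Le : {set {set T}}) a b : forall t S, valid_seq e Lv Le S t -> (a, b) \in t ->
  exists S' : {set T}, S \subset S' /\ valid_force e Lv Le S' a b.
Proof.
elim=> [|f t IH] S //= /andP [vf vs]; rewrite in_cons => /orP [/eqP ef|ht].
  by exists S; move: vf; rewrite -ef.
have [S' [sub v]] := IH _ vs ht; exists S'; split => //.
apply: subset_trans sub; exact: subsetUr.
Qed.

Lemma target_in : forall (t : seq (T * T)) (S : {set T}) v, v \in after S t -> v \notin S ->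
  exists x, (x, v) \in t.
Proof.
elim=> [|[a b] t IH] S v /=; first by move=> ->.
move=> vin vS; case: (eqVneq b v) => [<-|bv]; first by exists a; rewrite mem_head.
have vS' : v \notin b |: S by rewrite !inE negb_or eq_sym bv vS.
by case: (IH _ _ vin vS') => x hx; exists x; rewrite in_cons hx orbT.
Qed.

Lemma exists_stalled (Lv : {set T}) (Le : {set {set T}}) : forall S : {set T}, exists t,
  valid_seq e Lv Le S t /\ stalled e Lv Le (after S t).
Proof.
suff H : forall n (S : {set T}), #|T| - #|S| <= n -> exists t,
    valid_seq e Lv Le S t /\ stalled e Lv Le (after S t).
  by move=> S; exact: (H _ S (leqnn _)).
elim=> [|n IH] S hS; (case: (boolP (stalled e Lv Le S)) => st; first by exists [::]);
  move/forallPn: st => [u /forallPn [w /negbNE vf]];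
  have wS : w \notin S by case/and5P: vf.
- have c := cardsU1 w S; rewrite wS /= in c.
  have := max_card (w |: S); lia.
- have c := cardsU1 w S; rewrite wS /= in c.
  have [|t [vt st]] := IH (w |: S); first lia.
  by exists ((u, w) :: t); rewrite /= vf vt.
Qed.

Lemma stay (Lv : {set T}) (Le : {set {set T}}) (S : {set T}) : (forall (S' : {set T}) p r, S' \subset S -> valid_force e Lv Le S' p r -> r \in S) ->
  forall t (S' : {set T}), S' \subset S -> valid_seq e Lv Le S' t -> after S' t \subset S.
Proof.
move=> H; elim=> [|[p r] t IH] S' sub //= /andP [vf vt].
by apply: IH vt; rewrite subUset sub1set (H _ _ _ sub vf) sub.
Qed.

Lemma key (B Lv : {set T}) (Le0 : {set {set T}}) l s : edge_set e Le0 -> #|Le0| + #|Lv| <= l ->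
  edge_leaky_forcing_set e B l -> valid_seq e Lv Le0 B s ->
  stalled e Lv Le0 (after B s) -> after B s = setT.
Proof.
move=> hE hc hEL vs st; set S := after B s.
pose W u := odflt u [pick w | valid_force e set0 set0 S u w].
pose U := [set u in Lv | [exists w, valid_force e set0 set0 S u w]].
pose Le := Le0 :|: [set [set u; W u] | u in U].
have WP : forall u, u \in U -> valid_force e set0 set0 S u (W u).
  move=> u; rewrite /U inE => /andP [_ /existsP [w hw]]; rewrite /W.
  case: pickP => [w' hw' /=|H]; first exact hw'.
  by have := H w; rewrite hw.
have hLe : edge_set e Le.
  move=> E; rewrite /Le inE => /orP [/hE //|/imsetP [u uU ->]].
  exists u, (W u); split => //; by have /and5P [_ _ _ ? _] := WP u uU.
have hcLe : #|Le| <= l.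
  have h1 := cardsU Le0 [set [set u; W u] | u in U].
  have h2 := leq_imset_card (fun u => [set u; W u]) U.
  have h3 : #|U| <= #|Lv|.
    by apply: subset_leq_card; apply/subsetP => u; rewrite /U inE => /andP [].
  rewrite /Le; set X := [set _ | _ in U] in h1 h2 *.
  move: h1 h2 h3 hc; set a := #|Le0 :|: X|; set b := #|Le0 :&: X|.
  set c := #|X|; set d := #|U|; lia.
have [t [vt stt]] := exists_stalled set0 Le B.
have full := hEL Le hLe hcLe t vt stt.
apply/eqP; rewrite eqEsubset subsetT /= -full.
apply: (stay _ (after_sub s B) vt).
move=> S' p r sub vf; apply/negPn/negP => rS.
have vfS := vf_lift sub rS vf.
case: (boolP (p \in Lv)) => pL.
- have vfD : valid_force e set0 set0 S p r by apply: vf_mono vfS; exact: sub0set.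
  have pU : p \in U by rewrite /U inE pL; apply/existsP; exists r.
  have rW := vf_uniq (WP p pU) vfD.
  have /and5P [_ _ _ _ /andP [nE _]] := vfS; move/negP: nE; apply.
  rewrite /Le inE; apply/orP; right; apply/imsetP; exists p => //; by rewrite rW.
- have vf2 : valid_force e Lv Le0 S p r.
    by apply: vf_setLv pL; apply: vf_mono vfS; exact: subsetUl.
  by move/forallP/(_ p)/forallP/(_ r)/negP: st; apply.
Qed.

End Proofs.

Theorem theorem2p3 (T : finType) (e : rel T)
    (e_sym : symmetric e) (e_irr : irreflexive e)
    (B : {set T}) (l : nat) (hl : 1 <= l) :
  edge_leaky_forcing_set e B l <->
  (leaky_forcing_set e B l.-1 /\
   forall L : {set T}, #|L| <= l.-1 ->
     forall v, v \notin B ->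
       exists x y, x != y /\ forces_in e L B x v /\ forces_in e L B y v).
Proof.
split.
- move=> hEL; split.
    move=> L hL s vs st; apply: (key _ _ hEL vs st).
      by move=> E; rewrite inE.
    rewrite cards0; lia.
  move=> L hL v vB; apply: NNPP => Hn.
  have Hn' : forall x y, x != y -> forces_in e L B x v -> forces_in e L B y v -> False.
    by move=> x y xy fx fy; apply: Hn; exists x, y.
  case: (classic (exists x, forces_in e L B x v)) => [[x [s0 [vs0 ins0]]]|Hno].
  + have exv : e x v by have [S' [_ /and5P [_ _ _ ? _]]] := forced vs0 ins0.
    pose Le0 := [set [set x; v]].
    have [s [vs st]] := exists_stalled e L Le0 B.
    have full : after B s = setT.
      apply: (key _ _ hEL vs st).
        by move=> E; rewrite inE => /eqP ->; exists x, v.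
      rewrite cards1; lia.
    have vin : v \in after B s by rewrite full inE.
    have [y hy] := target_in vin vB.
    have [S' [_ vfy]] := forced vs hy.
    have yx : y != x.
      have /and5P [_ _ _ _ /andP [nE _]] := vfy.
      by apply/eqP => yx; move: nE; rewrite yx inE eqxx.
    apply: (Hn' y x yx); last by exists s0.
    by exists s; split => //; apply: (vs_mono (sub0set Le0)).
  + have [s [vs st]] := exists_stalled e L set0 B.
    have full : after B s = setT.
      apply: (key _ _ hEL vs st).
        by move=> E; rewrite inE.
      rewrite cards0; lia.
    have vin : v \in after B s by rewrite full inE.
    have [y hy] := target_in vin vB.
    by apply: Hno; exists y, s.
- move=> [hLk hDF] Le hE hc s vs st; set S := after B s.
  pose U := [set u | [exists w, valid_force e set0 set0 S u w]].
  pose W u := odflt u [pick w | valid_force e set0 set0 S u w].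
  have WP : forall u, u \in U -> valid_force e set0 set0 S u (W u).
    move=> u; rewrite /U inE => /existsP [w hw]; rewrite /W.
    case: pickP => [w' hw' /=|H]; first exact hw'.
    by have := H w; rewrite hw.
  have blocked : forall p r, valid_force e set0 set0 S p r -> [set p; r] \in Le.
    move=> p r vf; move/forallP/(_ p)/forallP/(_ r): st; apply: contraNT => nE.
    move: vf => /and5P [a b c d /andP [_ g]].
    by apply/and5P; split => //; apply/andP; split.
  have inj : {in U &, injective (fun u => [set u; W u])}.
    move=> u u' uU u'U eq.
    have : u \in [set u'; W u'] by rewrite -eq !inE eqxx.
    rewrite !inE => /orP [/eqP //|/eqP uW]; exfalso.
    have /and5P [uS _ _ _ _] := WP u uU.
    have /and5P [_ _ WS _ _] := WP u' u'U.
    by move: WS; rewrite -uW uS.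
  have hU : #|U| <= l.
    apply: leq_trans hc; rewrite -(card_in_imset inj); apply: subset_leq_card.
    by apply/subsetP => E /imsetP [u uU ->]; exact: blocked (WP u uU).
  have BS : B \subset S by exact: after_sub.
  case: (leqP #|U| l.-1) => hUl.
  + have [t [vt stt]] := exists_stalled e U set0 B.
    have full := hLk U hUl t vt stt.
    apply/eqP; rewrite eqEsubset subsetT /= -full.
    apply: (stay _ BS vt).
    move=> S' p r sub vf; apply/negPn/negP => rS.
    have vfS := vf_lift sub rS vf.
    have /and5P [_ pU _ _ _] := vfS.
    move/negP: pU; apply; rewrite /U inE; apply/existsP; exists r; exact: vf_drop vfS.
  + exfalso.
    have U0 : 0 < #|U| by lia.
    case/card_gt0P: U0 => u0 u0U.
    pose L := U :\ u0.
    have hL : #|L| <= l.-1 by have := cardsD1 u0 U; rewrite u0U /L; lia.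
    pose w0 := W u0.
    have vf0 := WP u0 u0U.
    have w0S : w0 \notin S by case/and5P: vf0.
    have w0B : w0 \notin B by apply: contra w0S; apply: (subsetP BS).
    have [x [y [xy [fx fy]]]] := hDF L hL w0 w0B.
    have [z [zu [t [vt int]]]] : exists z, z != u0 /\ forces_in e L B z w0.
      case: (eqVneq x u0) => [xu|xu]; last by exists x.
      by exists y; split => //; rewrite -xu eq_sym.
    have pu0 : forall (S' : {set T}) p r, S' \subset S -> r \notin S ->
        valid_force e L set0 S' p r -> p = u0 /\ r = w0.
      move=> S' p r sub rS vf.
      have vfS := vf_lift sub rS vf.
      have vfD := vf_drop vfS.
      have pU : p \in U by rewrite /U inE; apply/existsP; exists r.
      have /and5P [_ pL _ _ _] := vfS.
      have pu : p = u0 by move: pL; rewrite /L in_setD1 pU andbT negbK => /eqP.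
      split => //; rewrite pu in vfD; exact: vf_uniq vf0 vfD.
    have esc : forall t (S' : {set T}), S' \subset S -> valid_seq e L set0 S' t -> (z, w0) \in t -> z = u0.
      elim=> [|[p r] t' IH] S' sub //= /andP [vf vt'].
      rewrite in_cons => /orP [/eqP [zp wr]|ht].
        case: (boolP (r \in S)) => rS; first by move: w0S; rewrite wr rS.
        by rewrite zp; case: (pu0 _ _ _ sub rS vf).
      case: (boolP (r \in S)) => rS.
        by apply: IH vt' ht; rewrite subUset sub1set rS sub.
      have [_ rw] := pu0 _ _ _ sub rS vf.
      have [S'' [sub2 /and5P [_ _ wS'' _ _]]] := forced vt' ht.
      by move: wS''; rewrite (subsetP sub2) // -rw !inE eqxx.
    by move: zu; rewrite (esc _ _ BS vt int) eqxx.
Qed.
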